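(* Let $F:\mathbf{C}\rightleftarrows\mathbf{D}:G$ be an adjunction ($F$ left adjoint to $G$). (a) If $\mathbf{D}$ has the Ramsey property for morphisms, then so does $\mathbf{C}$. (b) If $\mathbf{C}$ has the dual Ramsey property for morphisms, then so does $\mathbf{D}$.
   Context: For objects $\mathcal{A},\mathcal{B}$ of a category, $\hom(\mathcal{A},\mathcal{B})$ is the set of morphisms $\mathcal{A}\to\mathcal{B}$; write $\mathcal{A}\to\mathcal{B}$ if it is nonempty. A $k$-coloring of a set $S$ is a decomposition $S=\mathcal{M}_1\cup\dots\cup\mathcal{M}_k$ into pairwise disjoint sets. For $k\ge2$, $\mathcal{C}\overset{hom}{\longrightarrow}(\mathcal{B})^{\mathcal{A}}_k$ means $\mathcal{A}\to\mathcal{B}\to\mathcal{C}$ and for every $k$-coloring of $\hom(\mathcal{A},\mathcal{C})$ there are $i$ and a morphism $w:\mathcal{B}\to\mathcal{C}$ with $w\cdot\hom(\mathcal{A},\mathcal{B})\subseteq\mathcal{M}_i$. A category has the Ramsey property for morphisms if for every $k\ge2$ and all objects $\mathcal{A},\mathcal{B}$ with $\mathcal{A}\to\mathcal{B}$ there is an object $\mathcal{C}$ with $\mathcal{C}\overset{hom}{\longrightarrow}(\mathcal{B})^{\mathcal{A}}_k$. A category $\mathbf{C}$ has the dual Ramsey property for morphisms if its opposite category $\mathbf{C}^{\mathrm{op}}$ has the Ramsey property for morphisms. *)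

(* Defs.v *)
Set Implicit Arguments.

(* A (locally small) category; morphism equality is Leibniz equality.
   [comp g f] is "g after f", written g . f in the paper. *)
Record Category := {
  Obj :> Type;
  Hom : Obj -> Obj -> Type;
  idm : forall A, Hom A A;
  comp : forall A B C, Hom B C -> Hom A B -> Hom A C;
  comp_assoc : forall A B C D (h : Hom C D) (g : Hom B C) (f : Hom A B),
      comp h (comp g f) = comp (comp h g) f;
  comp_id_l : forall A B (f : Hom A B), comp (idm B) f = f;
  comp_id_r : forall A B (f : Hom A B), comp f (idm A) = f
}.

Arguments Hom {c} _ _.
Arguments idm {c} _.
Arguments comp {c A B C} _ _.

Definition op (C : Category) : Category :=
  {| Obj := Obj C;
     Hom := fun A B => @Hom C B A;
     idm := fun A => @idm C A;
     comp := fun A B D (g : @Hom C D B) (f : @Hom C B A) => @comp C D B A f g;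
     comp_assoc := fun A B D E h g f =>
        eq_sym (@comp_assoc C E D B A f g h);
     comp_id_l := fun A B f => @comp_id_r C B A f;
     comp_id_r := fun A B f => @comp_id_l C B A f |}.

Record Functor (C D : Category) := {
  fobj :> Obj C -> Obj D;
  fmap : forall A B, @Hom C A B -> @Hom D (fobj A) (fobj B);
  fmap_id : forall A, fmap A A (@idm C A) = @idm D (fobj A);
  fmap_comp : forall A B E (g : @Hom C B E) (f : @Hom C A B),
      fmap A E (@comp C A B E g f) = @comp D _ _ _ (fmap B E g) (fmap A B f)
}.

Arguments fmap {C D} _ {A B} _.

Record Adjunction (C D : Category) (F : Functor C D) (G : Functor D C) := {
  adj_phi : forall (X : Obj C) (Y : Obj D), @Hom D (F X) Y -> @Hom C X (G Y);
  adj_psi : forall (X : Obj C) (Y : Obj D), @Hom C X (G Y) -> @Hom D (F X) Y;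
  adj_psi_phi : forall X Y (h : @Hom D (F X) Y), adj_psi X Y (adj_phi X Y h) = h;
  adj_phi_psi : forall X Y (k : @Hom C X (G Y)), adj_phi X Y (adj_psi X Y k) = k;
  adj_natural : forall (X X' : Obj C) (Y Y' : Obj D)
      (f : @Hom C X' X) (g : @Hom D Y Y') (h : @Hom D (F X) Y),
      adj_phi X' Y' (comp g (comp h (fmap F f))) = comp (fmap G g) (comp (adj_phi X Y h) f)
}.

Definition arrow (C : Category) (A B : Obj C) : Prop := inhabited (@Hom C A B).

(* A k-coloring of hom(A,C) is a map chi : hom(A,C) -> {0,..,k-1}
   (the colour classes M_i = chi^{-1}(i) form the decomposition).
   C --hom--> (B)^A_k : *)
Definition ramsey_arrow (Cat : Category) (C B A : Obj Cat) (k : nat) : Prop :=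
  @arrow Cat A B /\ @arrow Cat B C /\
  forall chi : @Hom Cat A C -> nat, (forall f, chi f < k) ->
    exists i : nat, exists w : @Hom Cat B C,
      forall f : @Hom Cat A B, chi (comp w f) = i.

Definition RamseyPropertyMorphisms (Cat : Category) : Prop :=
  forall k : nat, 2 <= k ->
  forall A B : Obj Cat, @arrow Cat A B ->
  exists C : Obj Cat, @ramsey_arrow Cat C B A k.

Definition DualRamseyPropertyMorphisms (Cat : Category) : Prop :=
  RamseyPropertyMorphisms (op Cat).

(* Main.v *)
Require Import Defs.

Theorem theorem3p1 (C D : Category) (F : Functor C D) (G : Functor D C)
  (adj : Adjunction F G) :
  (RamseyPropertyMorphisms D -> RamseyPropertyMorphisms C) /\
  (DualRamseyPropertyMorphisms C -> DualRamseyPropertyMorphisms D).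
Proof.
  split.
  - intros HD k Hk A B [f0].
    destruct (HD k Hk (F A) (F B) (inhabits (fmap F f0))) as [E [_ [[v] HE]]].
    exists (G E). split; [exact (inhabits f0)|]. split.
    + exact (inhabits (adj_phi adj B E v)).
    + intros chi Hchi.
      destruct (HE (fun h => chi (adj_phi adj A E h))
                  (fun h => Hchi _)) as [i [w Hw]].
      exists i, (adj_phi adj B E w). intros f.
      specialize (Hw (fmap F f)).
      pose proof (@adj_natural _ _ _ _ adj _ _ _ _ f (idm E) w) as N.
      rewrite fmap_id, !comp_id_l in N.
      rewrite <- N. exact Hw.
  - intros HC k Hk A B [f0]. simpl in f0.
    destruct (HC k Hk (G A) (G B) (inhabits (fmap G f0 : @Hom (op C) (G A) (G B))))
      as [E [_ [[v] HE]]].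
    simpl in v.
    exists (F E). split; [exact (inhabits f0)|]. split.
    + exact (inhabits (adj_psi adj E B v : @Hom (op D) B (F E))).
    + intros chi Hchi. simpl in chi.
      destruct (HE (fun h => chi (adj_psi adj E A h))
                  (fun h => Hchi _)) as [i [w Hw]].
      simpl in w.
      exists i, (adj_psi adj E B w). intros f. simpl in f. simpl.
      specialize (Hw (fmap G f)). simpl in Hw.
      pose proof (@adj_natural _ _ _ _ adj _ _ _ _ (@idm C E) f (adj_psi adj E B w)) as N.
      rewrite fmap_id, comp_id_r, adj_phi_psi, comp_id_r in N.
      rewrite <- N, adj_psi_phi in Hw. exact Hw.
Qed.
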